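(* Let $\alpha: I\to M$ be a unit-speed curve on an oriented surface $M\subset E^3$ with Darboux frame $\{T,V,U\}$ and curvatures $k_g,k_n,\tau_g$, with $k_g(s)\neq 0$ for all $s\in I$. Let $c_1$ be a nonzero real constant, let $\psi$ be an antiderivative of $k_n\tau_g/k_g$ on $I$, and let $$\gamma(s)=\alpha(s)+c_1e^{-\psi(s)}\Big(\frac{\tau_g(s)}{k_g(s)}T(s)+U(s)\Big),$$ and assume $\gamma$ is regular. Then $\gamma$ is a general helix if and only if $\alpha$ is a helical curve on $M$.
   Context: $M$ is an oriented surface in Euclidean 3-space $E^3$ and $\alpha:I\to M$ is a unit-speed curve with arc-length parameter $s$. Its Darboux frame $\{T,V,U\}$ consists of the unit tangent $T=\alpha'$, the unit surface normal $U$ of $M$ along $\alpha$, and $V=U\times T$; it satisfies $T'=k_gV+k_nU$, $V'=-k_gT+\tau_gU$, $U'=-k_nT-\tau_gV$, where $k_g,k_n,\tau_g$ are the geodesic curvature, normal curvature and geodesic torsion. A regular curve is a general helix if its unit tangent makes a constant angle with a fixed direction. $\alpha$ is a helical curve on $M$ if $\langle T,d\rangle$ is constant for some fixed unit vector $d$. *)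

(* Defs.v *)
From Stdlib Require Import Reals.
From Coquelicot Require Import Coquelicot.
Open Scope R_scope.

Record vec := mkV { vx : R; vy : R; vz : R }.

Definition vadd (u v : vec) : vec := mkV (vx u + vx v) (vy u + vy v) (vz u + vz v).
Definition vscal (c : R) (v : vec) : vec := mkV (c * vx v) (c * vy v) (c * vz v).
Definition vopp (v : vec) : vec := vscal (-1) v.
Definition vdot (u v : vec) : R := vx u * vx v + vy u * vy v + vz u * vz v.
Definition vnorm (v : vec) : R := sqrt (vdot v v).
Definition vcross (u v : vec) : vec :=
  mkV (vy u * vz v - vz u * vy v)
      (vz u * vx v - vx u * vz v)
      (vx u * vy v - vy u * vx v).
Definition vzero : vec := mkV 0 0 0.

Definition vderiv (f : R -> vec) (s : R) (v : vec) : Prop :=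
  is_derive (fun t => vx (f t)) s (vx v) /\
  is_derive (fun t => vy (f t)) s (vy v) /\
  is_derive (fun t => vz (f t)) s (vz v).

Definition Iopen (a b : Rbar) (s : R) : Prop := Rbar_lt a s /\ Rbar_lt s b.

Definition regular_on (I : R -> Prop) (g : R -> vec) : Prop :=
  forall s, I s -> exists v, vderiv g s v /\ v <> vzero.

Definition general_helix_on (I : R -> Prop) (g : R -> vec) : Prop :=
  regular_on I g /\
  exists d : vec, vnorm d = 1 /\
  exists c : R, forall s v, I s -> vderiv g s v ->
    vdot (vscal (/ vnorm v) v) d = c.

Definition helical_on (I : R -> Prop) (T : R -> vec) : Prop :=
  exists d : vec, vnorm d = 1 /\
  exists c : R, forall s, I s -> vdot (T s) d = c.

Definition darboux_frame (I : R -> Prop) (alpha T V U : R -> vec)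
  (kg kn tg : R -> R) : Prop :=
  forall s, I s ->
    vderiv alpha s (T s) /\
    vdot (T s) (T s) = 1 /\ vdot (U s) (U s) = 1 /\ vdot (T s) (U s) = 0 /\
    V s = vcross (U s) (T s) /\
    vderiv T s (vadd (vscal (kg s) (V s)) (vscal (kn s) (U s))) /\
    vderiv V s (vadd (vscal (- kg s) (T s)) (vscal (tg s) (U s))) /\
    vderiv U s (vadd (vscal (- kn s) (T s)) (vscal (- tg s) (V s))).

(* Main.v *)
Require Import Defs.
From Stdlib Require Import Reals Lra Classical.
From Coquelicot Require Import Coquelicot.
Open Scope R_scope.
Lemma Iopen_between a b x y z : Iopen a b x -> Iopen a b y -> x <= z <= y -> Iopen a b z.
Proof.
  unfold Iopen; destruct a as [a| |], b as [b| |]; simpl; intuition lra.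
Qed.

Lemma cont_of_deriv f x l : is_derive f x l -> continuity_pt f x.
Proof.
  intro H; apply is_derive_Reals in H.
  apply derivable_continuous_pt. exists l. exact H.
Qed.

Lemma quot_pos G x h : h <> 0 -> 0 < (G (x+h) - G x)/h * h -> G x < G (x+h).
Proof. intros Hh H. replace ((G (x+h) - G x)/h * h) with (G (x+h) - G x) in H by (field; auto). lra. Qed.

Lemma right_incr G x y l : is_derive G x l -> 0 < l -> x < y ->
  exists t, x < t < y /\ G x < G t.
Proof.
  intros H Hl Hxy. apply is_derive_Reals in H.
  destruct (H l Hl) as [delta Hd].
  set (h := Rmin (delta/2) ((y-x)/2)).
  assert (Hh0 : 0 < h). { unfold h; apply Rmin_pos; pose proof (cond_pos delta); lra. }
  assert (Hh1 : h <= delta/2) by apply Rmin_l.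
  assert (Hh2 : h <= (y-x)/2) by apply Rmin_r.
  pose proof (cond_pos delta).
  exists (x+h). split. lra.
  assert (Hq := Hd h ltac:(lra) ltac:(rewrite Rabs_pos_eq; lra)).
  apply Rabs_def2 in Hq. destruct Hq as [Hq1 Hq2].
  apply quot_pos. lra. apply Rmult_lt_0_compat; lra.
Qed.

Lemma left_incr G x y l : is_derive G y l -> l < 0 -> x < y ->
  exists t, x < t < y /\ G y < G t.
Proof.
  intros H Hl Hxy. apply is_derive_Reals in H.
  destruct (H (-l) ltac:(lra)) as [delta Hd].
  set (h := Rmin (delta/2) ((y-x)/2)).
  assert (Hh0 : 0 < h). { unfold h; apply Rmin_pos; pose proof (cond_pos delta); lra. }
  assert (Hh1 : h <= delta/2) by apply Rmin_l.
  assert (Hh2 : h <= (y-x)/2) by apply Rmin_r.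
  pose proof (cond_pos delta).
  exists (y+ -h). split. lra.
  assert (Hq := Hd (-h) ltac:(lra) ltac:(rewrite Rabs_Ropp, Rabs_pos_eq; lra)).
  apply Rabs_def2 in Hq. destruct Hq as [Hq1 Hq2].
  apply quot_pos. lra.
  replace ((G (y + - h) - G y) / - h * - h) with (- ((G (y + - h) - G y) / - h) * h) by ring.
  apply Rmult_lt_0_compat; lra.
Qed.

Lemma darboux_core G D x y : x < y ->
  (forall t, x <= t <= y -> is_derive G t (D t)) ->
  (forall t, x <= t <= y -> D t <> 0) ->
  0 < D x -> D y < 0 -> False.
Proof.
  intros Hxy HG HD Hx Hy.
  destruct (continuity_ab_maj G x y ltac:(lra)) as [m [Hm1 Hm2]].
  { intros c Hc. exact (cont_of_deriv _ _ _ (HG c Hc)). }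
  assert (HDm := HD m Hm2).
  destruct (Rlt_or_le 0 (D m)) as [Hp|Hn].
  - destruct (Req_dec m y) as [->|Hmy]. lra.
    destruct (right_incr G m y (D m) (HG m Hm2) Hp ltac:(lra)) as [t [Ht1 Ht2]].
    specialize (Hm1 t ltac:(lra)). lra.
  - destruct (Req_dec m x) as [->|Hmx]. lra.
    destruct (left_incr G x m (D m) (HG m Hm2) ltac:(lra) ltac:(lra)) as [t [Ht1 Ht2]].
    specialize (Hm1 t ltac:(lra)). lra.
Qed.

Lemma darboux a b G D x y :
  (forall t, Iopen a b t -> is_derive G t (D t)) ->
  (forall t, Iopen a b t -> D t <> 0) ->
  Iopen a b x -> Iopen a b y -> 0 < D x * D y.
Proof.
  intros HG HD Hx Hy.
  assert (gen : forall G D x y, x < y ->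
    (forall t, Iopen a b t -> is_derive G t (D t)) ->
    (forall t, Iopen a b t -> D t <> 0) ->
    Iopen a b x -> Iopen a b y -> 0 < D x -> D y < 0 -> False).
  { clear. intros G D x y Hxy HG HD Hx Hy.
    apply (darboux_core G D x y Hxy).
    - intros t Ht; apply HG; exact (Iopen_between a b x y t Hx Hy Ht).
    - intros t Ht; apply HD; exact (Iopen_between a b x y t Hx Hy Ht). }
  assert (gen2 : forall x y, x < y -> Iopen a b x -> Iopen a b y -> 0 < D x * D y).
  { intros u v Huv Hu Hv.
    assert (HDu := HD u Hu). assert (HDv := HD v Hv).
    destruct (Rlt_or_le 0 (D u)), (Rlt_or_le 0 (D v)).
    - nra.
    - exfalso; apply (gen G D u v); auto. lra.
    - exfalso; apply (gen (fun t => - G t) (fun t => - D t) u v); auto.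
      + intros t Ht. apply (is_derive_opp G t (D t)). auto.
      + intros t Ht Hc. apply (HD t Ht). lra.
      + lra.
      + lra.
    - nra. }
  destruct (Rtotal_order x y) as [H|[H|H]].
  - auto.
  - subst. assert (HDy := HD y Hy). nra.
  - rewrite Rmult_comm; auto.
Qed.
Lemma comp_deriv (A Tc Uc Vc kg kn tg psi : R -> R) (c1 s dmu : R) :
  kg s <> 0 ->
  is_derive A s (Tc s) ->
  is_derive Tc s (kg s * Vc s + kn s * Uc s) ->
  is_derive Uc s (- kn s * Tc s + - tg s * Vc s) ->
  is_derive psi s (kn s * tg s / kg s) ->
  is_derive (fun t => tg t / kg t) s dmu ->
  is_derive (fun t => A t + c1 * exp (- psi t) * (tg t / kg t * Tc t + Uc t)) s
    ((1 + c1 * exp (- psi s) * (dmu - kn s * (tg s / kg s)^2 - kn s)) * Tc s).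
Proof.
  intros Hkg HA HT HU Hpsi Hmu.
  assert (Hf : is_derive (fun t => c1 * exp (- psi t)) s
     (c1 * (- (kn s * tg s / kg s) * exp (- psi s)))).
  { apply is_derive_scal.
    apply (is_derive_comp exp (fun t => - psi t)).
    apply is_derive_exp. apply (is_derive_opp psi). exact Hpsi. }
  pose proof (is_derive_plus _ _ _ _ _ HA
     (is_derive_mult _ _ _ _ _ Hf
        (is_derive_plus _ _ _ _ _ (is_derive_mult _ _ _ _ _ Hmu HT Rmult_comm) HU) Rmult_comm)) as H.
  match type of H with is_derive _ _ ?v => replace (_ * Tc s) with v end.
  exact H.
  unfold plus, mult; simpl. unfold scal; simpl. unfold mult; simpl.
  unfold opp; simpl. field. auto.
Qed.

Lemma dot_deriv f s v d : vderiv f s v -> is_derive (fun t => vdot (f t) d) s (vdot v d).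
Proof.
  intros [H1 [H2 H3]].
  pose proof (is_derive_plus _ _ _ _ _ (is_derive_plus _ _ _ _ _
     (is_derive_scal _ _ (vx d) _ H1) (is_derive_scal _ _ (vy d) _ H2))
     (is_derive_scal _ _ (vz d) _ H3)) as H.
  eapply is_derive_ext; [ | match type of H with is_derive _ _ ?w =>
     replace (vdot v d) with w; [exact H|] end ].
  - intro t; unfold vdot; simpl; unfold plus; simpl; ring.
  - unfold vdot; simpl; unfold plus; simpl; ring.
Qed.

Lemma unit_dot (v t d : vec) l : vx v = l * vx t -> vy v = l * vy t -> vz v = l * vz t ->
  vdot t t = 1 -> vdot (vscal (/ vnorm v) v) d = l / Rabs l * vdot t d.
Proof.
  intros Hx Hy Hz Ht.
  assert (Hvv : vdot v v = Rsqr l).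
  { unfold vdot in *; rewrite Hx, Hy, Hz; unfold Rsqr.
    replace (l * vx t * (l * vx t) + l * vy t * (l * vy t) + l * vz t * (l * vz t))
      with (l * l * (vx t * vx t + vy t * vy t + vz t * vz t)) by ring.
    rewrite Ht; ring. }
  unfold vnorm; rewrite Hvv, sqrt_Rsqr_abs.
  unfold vdot, vscal; simpl; rewrite Hx, Hy, Hz; unfold Rdiv; ring.
Qed.

Lemma sign_eq x y : 0 < x * y -> x / Rabs x = y / Rabs y.
Proof.
  intro H.
  destruct (Rcase_abs x) as [Hx|Hx], (Rcase_abs y) as [Hy|Hy].
  - rewrite (Rabs_left x), (Rabs_left y) by lra. field; lra.
  - exfalso; nra.
  - exfalso; nra.
  - assert (x <> 0) by (intro; subst; lra). assert (y <> 0) by (intro; subst; lra).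
    rewrite (Rabs_right x), (Rabs_right y) by lra. field; lra.
Qed.

Lemma sign_pm x : x <> 0 -> x / Rabs x = 1 \/ x / Rabs x = -1.
Proof.
  intro H. destruct (Rcase_abs x) as [Hx|Hx].
  - right. rewrite Rabs_left by lra. field; lra.
  - left. rewrite Rabs_right by lra. field; lra.
Qed.

Theorem theorem3p6 (a b : Rbar) (alpha T V U : R -> vec) (kg kn tg : R -> R)
  (c1 : R) (psi : R -> R)
  (Hframe : darboux_frame (Iopen a b) alpha T V U kg kn tg)
  (Hsmooth : forall s, Iopen a b s ->
     ex_derive kg s /\ ex_derive kn s /\ ex_derive tg s)
  (Hkg : forall s, Iopen a b s -> kg s <> 0)
  (Hc1 : c1 <> 0)
  (Hpsi : forall s, Iopen a b s -> is_derive psi s (kn s * tg s / kg s))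
  (Hreg : regular_on (Iopen a b)
     (fun s => vadd (alpha s)
        (vscal (c1 * exp (- psi s))
           (vadd (vscal (tg s / kg s) (T s)) (U s))))) :
  general_helix_on (Iopen a b)
     (fun s => vadd (alpha s)
        (vscal (c1 * exp (- psi s))
           (vadd (vscal (tg s / kg s) (T s)) (U s))))
  <-> helical_on (Iopen a b) T.
Proof.
  set (gam := fun s => vadd (alpha s)
        (vscal (c1 * exp (- psi s))
           (vadd (vscal (tg s / kg s) (T s)) (U s)))) in *.
  set (lam := fun s => 1 + c1 * exp (- psi s) *
     (Derive (fun t => tg t / kg t) s - kn s * (tg s / kg s)^2 - kn s)).
  assert (Hmu : forall s, Iopen a b s ->
     is_derive (fun t => tg t / kg t) s (Derive (fun t => tg t / kg t) s)).
  { intros s Hs. apply Derive_correct.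
    destruct (Hsmooth s Hs) as [H1 [_ H3]].
    apply ex_derive_div; auto. }
  assert (Hgam : forall s, Iopen a b s -> vderiv gam s (vscal (lam s) (T s))).
  { intros s Hs.
    destruct (Hframe s Hs) as [HA [_ [_ [_ [_ [HT [_ HU]]]]]]].
    destruct HA as [A1 [A2 A3]]. destruct HT as [T1 [T2 T3]]. destruct HU as [U1 [U2 U3]].
    simpl in *.
    split; [|split]; simpl.
    - exact (comp_deriv (fun t => vx (alpha t)) (fun t => vx (T t)) (fun t => vx (U t))
        (fun t => vx (V t)) kg kn tg psi c1 s _ (Hkg s Hs) A1 T1 U1 (Hpsi s Hs) (Hmu s Hs)).
    - exact (comp_deriv (fun t => vy (alpha t)) (fun t => vy (T t)) (fun t => vy (U t))
        (fun t => vy (V t)) kg kn tg psi c1 s _ (Hkg s Hs) A2 T2 U2 (Hpsi s Hs) (Hmu s Hs)).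
    - exact (comp_deriv (fun t => vz (alpha t)) (fun t => vz (T t)) (fun t => vz (U t))
        (fun t => vz (V t)) kg kn tg psi c1 s _ (Hkg s Hs) A3 T3 U3 (Hpsi s Hs) (Hmu s Hs)). }
  assert (Hvel : forall s v, Iopen a b s -> vderiv gam s v ->
     vx v = lam s * vx (T s) /\ vy v = lam s * vy (T s) /\ vz v = lam s * vz (T s)).
  { intros s v Hs Hv. destruct (Hgam s Hs) as [G1 [G2 G3]]. destruct Hv as [V1 [V2 V3]].
    apply is_derive_unique in G1, G2, G3, V1, V2, V3.
    rewrite <- V1, <- V2, <- V3, G1, G2, G3. simpl. auto. }
  assert (Hlam0 : forall s, Iopen a b s -> lam s <> 0).
  { intros s Hs Hl. destruct (Hreg s Hs) as [v [Hv Hv0]].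
    destruct (Hvel s v Hs Hv) as [E1 [E2 E3]]. apply Hv0.
    destruct v as [x y z]; unfold vzero; simpl in *. rewrite Hl in *.
    f_equal; lra. }
  assert (HTT : forall s, Iopen a b s -> vdot (T s) (T s) = 1).
  { intros s Hs; apply (Hframe s Hs). }
  assert (Hud : forall s v d, Iopen a b s -> vderiv gam s v ->
     vdot (vscal (/ vnorm v) v) d = lam s / Rabs (lam s) * vdot (T s) d).
  { intros s v d Hs Hv. destruct (Hvel s v Hs Hv) as [E1 [E2 E3]].
    apply unit_dot; auto. }
  split.
  - intros [_ [d [Hd [c Hc]]]].
    exists d; split; [exact Hd|].
    set (h := fun t => vdot (T t) d).
    assert (Hpm : forall s, Iopen a b s -> h s = c \/ h s = - c).
    { intros s Hs. destruct (Hreg s Hs) as [v [Hv _]].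
      pose proof (Hc s v Hs Hv) as E. rewrite (Hud s v d Hs Hv) in E.
      unfold h. destruct (sign_pm _ (Hlam0 s Hs)) as [S|S]; rewrite S in E; lra. }
    assert (Hhd : forall s, Iopen a b s -> is_derive h s (vdot (vadd (vscal (kg s) (V s)) (vscal (kn s) (U s))) d)).
    { intros s Hs. apply dot_deriv. apply (Hframe s Hs). }
    assert (Hcl : forall x y, x < y -> Iopen a b x -> Iopen a b y -> h x = h y).
    { intros x y Hxy Hx Hy.
      destruct (Req_dec (h x) (h y)) as [E|E]; [exact E|exfalso].
      assert (Hc0 : c <> 0).
      { intro; subst c. destruct (Hpm x Hx), (Hpm y Hy); lra. }
      assert (Hyx : h y = - h x) by (destruct (Hpm x Hx), (Hpm y Hy); lra).
      assert (Hx0 : h x <> 0) by (destruct (Hpm x Hx); lra).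
      destruct (Ranalysis5.IVT_interv (fun t => - (h t * h x)) x y) as [z [Hz Hz0]].
      + intros t Ht. apply continuity_pt_opp. apply continuity_pt_mult.
        * exact (cont_of_deriv _ _ _ (Hhd t (Iopen_between a b x y t Hx Hy Ht))).
        * apply continuity_pt_const. intros u w; reflexivity.
      + exact Hxy.
      + assert (0 < h x * h x) by nra. lra.
      + rewrite Hyx. assert (0 < h x * h x) by nra. lra.
      + assert (h z = 0) by (apply Rmult_integral in Hz0 || idtac; nra).
        destruct (Hpm z (Iopen_between a b x y z Hx Hy Hz)); lra. }
    destruct (classic (exists s0, Iopen a b s0)) as [[s0 Hs0]|Hne].
    + exists (h s0). intros s Hs. fold (h s).
      destruct (Rtotal_order s s0) as [L|[L|L]].
      * auto.
      * subst; auto.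
      * symmetry; auto.
    + exists 0. intros s Hs. exfalso; apply Hne; eauto.
  - intros [d [Hd [c Hc]]].
    split; [exact Hreg|].
    exists d; split; [exact Hd|].
    destruct (classic (exists s0, Iopen a b s0)) as [[s0 Hs0]|Hne].
    + exists (lam s0 / Rabs (lam s0) * c). intros s v Hs Hv.
      rewrite (Hud s v d Hs Hv), (Hc s Hs).
      destruct (Req_dec c 0) as [C|C]; [subst c; ring|].
      assert (P : 0 < (lam s * c) * (lam s0 * c)).
      { apply (darboux a b (fun t => vdot (gam t) d) (fun t => lam t * c)).
        - intros t Ht. pose proof (dot_deriv _ _ _ d (Hgam t Ht)) as D.
          replace (lam t * c) with (vdot (vscal (lam t) (T t)) d); [exact D|].
          rewrite <- (Hc t Ht). unfold vdot, vscal; simpl; ring.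
        - intros t Ht. apply Rmult_integral_contrapositive_currified; auto.
        - exact Hs.
        - exact Hs0. }
      rewrite (sign_eq (lam s) (lam s0)); [reflexivity|].
      assert (0 < c * c) by nra. nra.
    + exists 0. intros s v Hs. exfalso; apply Hne; eauto.
Qed.
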